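(* In the $\mathbf N$-agent system described in the context, let $\{\boldsymbol\mu_t^{\mathbf N},\boldsymbol\nu_t^{\mathbf N}\}_{t\ge0}$ be the empirical joint state and action distributions induced by a policy $\boldsymbol\pi=\{\boldsymbol\pi_t\}_{t\ge0}$. Then for every $t\ge0$, $$\mathbb E\big|\boldsymbol\nu_t^{\mathbf N}-\nu^{\mathrm{MF}}(\boldsymbol\mu_t^{\mathbf N},\boldsymbol\pi_t)\big|_1\le\frac1{N_{\mathrm{pop}}}\Big(\sum_{k\in[K]}\sqrt{N_k}\Big)\sqrt{|\mathcal U|}.$$
   Context: Fix $K\ge1$, $N_1,\dots,N_K\ge1$, $[K]=\{1,\dots,K\}$, $N_{\mathrm{pop}}=\sum_kN_k$, finite sets $\mathcal X,\mathcal U$, $\mathcal P(A)$ the probability distributions on $A$, $|\cdot|_1$ the $L_1$ norm. Agent $j\in[N_k]$ of class $k$ has state $x_{j,k}^t\in\mathcal X$ and action $u_{j,k}^t\in\mathcal U$; $\boldsymbol\mu_t^{\mathbf N}(x,k)=\frac1{N_{\mathrm{pop}}}\sum_{j=1}^{N_k}\mathbf 1(x_{j,k}^t=x)$, $\boldsymbol\nu_t^{\mathbf N}(u,k)=\frac1{N_{\mathrm{pop}}}\sum_{j=1}^{N_k}\mathbf 1(u_{j,k}^t=u)$. For each $k$, $P_k:\mathcal X\times\mathcal U\times\mathcal P(\mathcal X\times[K])\times\mathcal P(\mathcal U\times[K])\to\mathcal P(\mathcal X)$ is a transition law. A policy is $\boldsymbol\pi=\{\boldsymbol\pi_t\}_{t\ge0}$,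 $\boldsymbol\pi_t=(\pi_k^t)_k$, with $\pi_k^t:\mathcal X\times\mathcal P(\mathcal X\times[K])\to\mathcal P(\mathcal U)$. Dynamics: conditioned on all states at time $t$, actions are independent across agents with $u_{j,k}^t\sim\pi_k^t(x_{j,k}^t,\boldsymbol\mu_t^{\mathbf N})$; conditioned on all states and actions at time $t$, next states are independent with $x_{j,k}^{t+1}\sim P_k(x_{j,k}^t,u_{j,k}^t,\boldsymbol\mu_t^{\mathbf N},\boldsymbol\nu_t^{\mathbf N})$. For $\boldsymbol\mu\in\mathcal P(\mathcal X\times[K])$ and decision rules $(\pi_k)_k$: $\nu^{\mathrm{MF}}(\boldsymbol\mu,\boldsymbol\pi)(u,k)=\sum_x\pi_k(x,\boldsymbol\mu)(u)\boldsymbol\mu(x,k)$. *)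

(* Defs.v *)
From HB Require Import structures.
From mathcomp Require Import all_boot all_order all_algebra.
Set Implicit Arguments. Unset Strict Implicit. Unset Printing Implicit Defensive.
Import Order.TTheory GRing.Theory Num.Theory.
Local Open Scope ring_scope.

Section MF.
Variables (R : rcfType) (X U : finType) (K : nat) (N : 'I_K -> nat).

Definition agent := {k : 'I_K & 'I_(N k)}.
Definition sconf := {ffun agent -> X}.
Definition aconf := {ffun agent -> U}.

Definition Npop : nat := \sum_(k < K) N k.

Definition is_pdist (A : finType) (f : A -> R) : Prop :=
  (forall a, 0 <= f a) /\ \sum_a f a = 1.

Definition emp_mu (c : sconf) : {ffun X * 'I_K -> R} :=
  [ffun xk => (\sum_(j < N xk.2) ((c (Tagged (fun k => 'I_(N k)) j) == xk.1) : nat)%:R)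
               / (Npop%:R)].

Definition emp_nu (a : aconf) : {ffun U * 'I_K -> R} :=
  [ffun uk => (\sum_(j < N uk.2) ((a (Tagged (fun k => 'I_(N k)) j) == uk.1) : nat)%:R)
               / (Npop%:R)].

Definition decision_rule := 'I_K -> X -> {ffun X * 'I_K -> R} -> {ffun U -> R}.

Definition nuMF (mu : {ffun X * 'I_K -> R}) (pik : decision_rule) : {ffun U * 'I_K -> R} :=
  [ffun uk => \sum_x pik uk.2 x mu uk.1 * mu (x, uk.2)].

Definition L1 (A : finType) (f g : A -> R) : R := \sum_a `|f a - g a|.

Definition act_prob (pi : nat -> decision_rule) (t : nat) (c : sconf) (a : aconf) : R :=
  \prod_(i : agent) pi t (tag i) (c i) (emp_mu c) (a i).

Definition trans_law :=
  'I_K -> X -> U -> {ffun X * 'I_K -> R} -> {ffun U * 'I_K -> R} -> {ffun X -> R}.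

Definition trans_prob (P : trans_law) (c : sconf) (a : aconf) (c' : sconf) : R :=
  \prod_(i : agent) P (tag i) (c i) (a i) (emp_mu c) (emp_nu a) (c' i).

Fixpoint state_law (mu0 : {ffun sconf -> R}) (pi : nat -> decision_rule) (P : trans_law)
    (t : nat) : {ffun sconf -> R} :=
  match t with
  | 0 => mu0
  | t'.+1 => [ffun c' => \sum_(c : sconf) \sum_(a : aconf)
               state_law mu0 pi P t' c * act_prob pi t' c a * trans_prob P c a c']
  end.

Definition expected_dev (mu0 : {ffun sconf -> R}) (pi : nat -> decision_rule) (P : trans_law)
    (t : nat) : R :=
  \sum_(c : sconf) \sum_(a : aconf)
    state_law mu0 pi P t c * act_prob pi t c a * L1 (emp_nu a) (nuMF (emp_mu c) (pi t)).

End MF.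

(* Main.v *)
Require Import Defs.
From HB Require Import structures.
From mathcomp Require Import all_boot all_order all_algebra.
From mathcomp Require Import ring lra.
Import Order.TTheory GRing.Theory Num.Theory.
Local Open Scope ring_scope.

Section Aux.
Variable R : rcfType.

Lemma Eprod (I J : finType) (p f : I -> J -> R) :
  \sum_(a : {ffun I -> J}) (\prod_i p i (a i)) * \prod_i f i (a i)
  = \prod_i \sum_j p i j * f i j.
Proof.
rewrite bigA_distr_bigA /=; apply: eq_bigr => a _; by rewrite -big_split.
Qed.

Lemma sum_prod1 (I J : finType) (p : I -> J -> R) :
  (forall i, \sum_j p i j = 1) -> \sum_(a : {ffun I -> J}) \prod_i p i (a i) = 1.
Proof. by move=> h; rewrite -bigA_distr_bigA big1. Qed.

Lemma prod_ge0 (I J : finType) (p : I -> J -> R) (a : {ffun I -> J}) :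
  (forall i j, 0 <= p i j) -> 0 <= \prod_i p i (a i).
Proof. by move=> h; apply: prodr_ge0 => i _. Qed.

Lemma E1 (I J : finType) (p : I -> J -> R) (hp : forall i, \sum_j p i j = 1)
  (i0 : I) (g : J -> R) :
  \sum_(a : {ffun I -> J}) (\prod_i p i (a i)) * g (a i0) = \sum_j p i0 j * g j.
Proof.
pose f := fun i v => if i == i0 then g v else 1.
transitivity (\sum_(a : {ffun I -> J}) (\prod_i p i (a i)) * \prod_i f i (a i)).
  apply: eq_bigr => a _; congr (_ * _).
  rewrite (bigD1 i0) //= /f eqxx [X in _ * X]big1 ?mulr1 // => i Hi.
  by rewrite (negbTE Hi).
rewrite Eprod (bigD1 i0) //= /f eqxx [X in _ * X]big1 ?mulr1 // => i Hi.
by rewrite (negbTE Hi); under eq_bigr do rewrite mulr1; exact: hp.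
Qed.

Lemma E2 (I J : finType) (p : I -> J -> R) (hp : forall i, \sum_j p i j = 1)
  (i0 i1 : I) (g h : J -> R) : i0 != i1 ->
  \sum_(a : {ffun I -> J}) (\prod_i p i (a i)) * (g (a i0) * h (a i1))
   = (\sum_j p i0 j * g j) * (\sum_j p i1 j * h j).
Proof.
move=> ne.
pose f := fun i v => if i == i0 then g v else if i == i1 then h v else 1.
have ne' : i1 != i0 by rewrite eq_sym.
transitivity (\sum_(a : {ffun I -> J}) (\prod_i p i (a i)) * \prod_i f i (a i)).
  apply: eq_bigr => a _; congr (_ * _).
  rewrite (bigD1 i0) //= (bigD1 i1) //= /f eqxx (negbTE ne') eqxx.
  rewrite [X in _ * (_ * X)]big1 ?mulr1 // => i /andP[Hi Hi'].
  by rewrite (negbTE Hi) (negbTE Hi').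
rewrite Eprod (bigD1 i0) //= (bigD1 i1) //= /f eqxx (negbTE ne') eqxx.
rewrite [X in _ * (_ * X)]big1 ?mulr1 // => i /andP[Hi Hi'].
by rewrite (negbTE Hi) (negbTE Hi'); under eq_bigr do rewrite mulr1; exact: hp.
Qed.

Lemma CS (A : finType) (w z : A -> R) : (forall a, 0 <= w a) ->
  (\sum_a w a * `|z a|) ^+ 2 <= (\sum_a w a) * \sum_a w a * z a ^+ 2.
Proof.
move=> hw.
rewrite expr2 mulr_suml.
under eq_bigr do rewrite mulr_sumr.
rewrite mulr_suml.
under [X in _ <= X]eq_bigr do rewrite mulr_sumr.
set V := fun a b => w a * (w b * z b ^+ 2).
have -> : \sum_i \sum_j w i * (w j * z j ^+ 2) =
   (\sum_i \sum_j V i j + \sum_i \sum_j V j i) / 2.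
  have E : \sum_i \sum_j V j i = \sum_i \sum_j V i j by rewrite exchange_big.
  rewrite E; have -> : \sum_i \sum_j w i * (w j * z j ^+ 2) = \sum_i \sum_j V i j by [].
  by move: (\sum_i \sum_j V i j) => S; lra.
rewrite -big_split /= mulr_suml; apply: ler_sum => a _.
rewrite -big_split /= mulr_suml; apply: ler_sum => b _.
rewrite /V -!(real_normK (num_real (z _))).
have := mulr_ge0 (mulr_ge0 (hw a) (hw b)) (sqr_ge0 (`|z a| - `|z b|)).
move: (w a) (w b) `|z a| `|z b| => x y u v H.
nra.
Qed.


Lemma jensen (A : finType) (w z : A -> R) : (forall a, 0 <= w a) ->
  \sum_a w a = 1 -> \sum_a w a * `|z a| <= Num.sqrt (\sum_a w a * z a ^+ 2).
Proof.
move=> hw h1; have := @CS A w z hw; rewrite h1 mul1r => H.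
have h0 : 0 <= \sum_a w a * `|z a| by apply: sumr_ge0 => a _; rewrite mulr_ge0.
by rewrite -(ger0_norm h0) -sqrtr_sqr; apply: ler_wsqrtr.
Qed.

Lemma key_ind (A : finType) (q : A -> R) (u : A) :
  \sum_v q v * ((v == u)%:R) = q u.
Proof.
rewrite (bigD1 u) //= eqxx mulr1 big1 ?addr0 // => v hv.
by rewrite (negbTE hv) mulr0.
Qed.

Lemma mean0 (A : finType) (q : A -> R) (u : A) : \sum_v q v = 1 ->
  \sum_v q v * ((v == u)%:R - q u) = 0.
Proof.
move=> h1; under eq_bigr do rewrite mulrBr.
by rewrite sumrB key_ind -mulr_suml h1 mul1r subrr.
Qed.

Lemma var_le (A : finType) (q : A -> R) (u : A) : \sum_v q v = 1 ->
  \sum_v q v * ((v == u)%:R - q u) ^+ 2 <= q u.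
Proof.
move=> h1.
have E : forall v, q v * ((v == u)%:R - q u) ^+ 2 =
   q v * (v == u)%:R * (1 - 2 * q u) + q u ^+ 2 * q v.
  by move=> v; case: (v == u) => /=; ring.
under eq_bigr do rewrite E.
rewrite big_split /= -mulr_suml -mulr_sumr key_ind h1 mulr1.
have := sqr_ge0 (q u); move: (q u) => c H; nra.
Qed.

End Aux.

Lemma core (R : rcfType) (U : finType) (K : nat) (N : 'I_K -> nat) (p : agent N -> U -> R)
 (hp0 : forall i u, 0 <= p i u) (hp1 : forall i, \sum_u p i u = 1)
 (m : {ffun U * 'I_K -> R})
 (hm : forall u k, m (u,k) = (\sum_(j < N k) p (Tagged (fun k => 'I_(N k)) j) u) / (Npop N)%:R) :
 \sum_(a : aconf U N) (\prod_i p i (a i)) * L1 (emp_nu R a) m <=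
   (\sum_(k < K) Num.sqrt ((N k)%:R : R)) * Num.sqrt (#|U|%:R : R) / (Npop N)%:R.
Proof.
rewrite /aconf /L1.
set w := fun a : {ffun agent N -> U} => \prod_i p i (a i).
have hw0 : forall a, 0 <= w a by move=> a; apply: prodr_ge0 => i _.
have hw1 : \sum_a w a = 1 by apply: sum_prod1.
under eq_bigr do rewrite mulr_sumr.
rewrite exchange_big /=.
have -> : \sum_(uk : U * 'I_K) \sum_a w a * `|emp_nu R a uk - m uk| =
   \sum_u \sum_k \sum_a w a * `|emp_nu R a (u,k) - m (u,k)|.
  by rewrite [RHS]pair_bigA; apply: eq_bigr => -[u k].
rewrite exchange_big /= !mulr_suml; apply: ler_sum => k _.
set T := fun j : 'I_(N k) => Tagged (fun k => 'I_(N k)) j.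
set Y := fun u (j : 'I_(N k)) (v : U) => (v == u)%:R - p (T j) u.
have hD : forall (a : {ffun agent N -> U}) u,
   `|emp_nu R a (u,k) - m (u,k)| = `|\sum_j Y u j (a (T j))| / (Npop N)%:R.
  move=> a u; rewrite ffunE hm /= -mulrBl -sumrB normrM normfV normr_nat //.
under eq_bigr do under eq_bigr do rewrite hD mulrA.
under eq_bigr do rewrite -mulr_suml.
rewrite -mulr_suml; apply: ler_wpM2r; first by rewrite invr_ge0 ler0n.
set s := fun u => \sum_(j < N k) p (T j) u.
have hs0 : forall u, 0 <= s u by move=> u; apply: sumr_ge0 => j _.
have hZ : forall u, \sum_a w a * `|\sum_j Y u j (a (T j))| <= Num.sqrt (s u).
  move=> u; apply: le_trans (@jensen R _ w (fun a => \sum_j Y u j (a (T j))) hw0 hw1) _; apply: ler_wsqrtr.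
  under eq_bigr do rewrite expr2 mulr_suml mulr_sumr.
  under eq_bigr do under eq_bigr do rewrite mulr_sumr.
  rewrite exchange_big /=.
  under eq_bigr do under eq_bigr do rewrite mulr_sumr.
  under eq_bigr do rewrite exchange_big /=.
  apply: ler_sum => j _.
  rewrite (bigD1 j) //= [X in _ + X]big1 ?addr0; last first.
    move=> j' hj'.
    have ne : T j != T j' by rewrite /T eq_Tagged /= eq_sym.
    by rewrite (@E2 _ _ _ p hp1 (T j) (T j') (Y u j) (Y u j')) // mean0 // mul0r.
  rewrite (@E1 _ _ _ p hp1 (T j) (fun v => Y u j v * Y u j v)) /=.
  under eq_bigr do rewrite -expr2.
  exact: var_le.
apply: le_trans (ler_sum _ (fun u _ => hZ u)) _.
have H := @CS R U (fun _ => 1) (fun u => Num.sqrt (s u)) (fun _ => ler01).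
have e1 : \sum_u 1 * `|Num.sqrt (s u)| = \sum_u Num.sqrt (s u).
  by apply: eq_bigr => u _; rewrite mul1r ger0_norm ?sqrtr_ge0.
have e2 : \sum_u 1 * Num.sqrt (s u) ^+ 2 = \sum_u s u.
  by apply: eq_bigr => u _; rewrite mul1r sqr_sqrtr.
have e3 : \sum_(u : U) (1 : R) = #|U|%:R by rewrite sumr_const.
have e4 : \sum_u s u = (N k)%:R.
  rewrite /s exchange_big /= (eq_bigr (fun _ => 1)) => [|j _]; last exact: hp1.
  by rewrite sumr_const card_ord.
rewrite e1 e2 e3 e4 in H.
have h0 : 0 <= \sum_u Num.sqrt (s u) by apply: sumr_ge0 => u _; apply: sqrtr_ge0.
rewrite mulrC -sqrtrM ?ler0n // -(ger0_norm h0) -sqrtr_sqr; exact: ler_wsqrtr.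
Qed.

Lemma state_law_pd (R : rcfType) (X U : finType) (K : nat) (N : 'I_K -> nat)
  (mu0 : {ffun sconf X N -> R})
  (pi : nat -> decision_rule R X U K)
  (P : trans_law R X U K)
  (hmu0 : is_pdist mu0)
  (hpi : forall t k x mu, is_pdist (pi t k x mu))
  (hP : forall k x u mu nu, is_pdist (P k x u mu nu)) (t : nat) :
  (forall c, 0 <= state_law mu0 pi P t c) /\ \sum_c state_law mu0 pi P t c = 1.
Proof.
elim: t => [|t [IH0 IH1]] /=; first by case: hmu0.
split.
  move=> c'; rewrite ffunE; apply: sumr_ge0 => c _; apply: sumr_ge0 => a _.
  rewrite mulr_ge0 ?mulr_ge0 //; apply: prodr_ge0 => i _.
    exact: (hpi _ _ _ _).1.
  exact: (hP _ _ _ _ _).1.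
under eq_bigr do rewrite ffunE.
rewrite exchange_big /=; under eq_bigr do rewrite exchange_big /=.
rewrite -[RHS]IH1; apply: eq_bigr => c _.
under eq_bigr do rewrite -mulr_sumr.
have h1 : forall a, \sum_c' trans_prob P c a c' = 1.
  move=> a; rewrite /trans_prob /sconf.
  apply: (@sum_prod1 R _ _ (fun i v => P (tag i) (c i) (a i) (emp_mu R c) (emp_nu R a) v)).
  by move=> i; exact: (hP _ _ _ _ _).2.
under eq_bigr do rewrite h1 mulr1.
rewrite -mulr_sumr.
have -> : \sum_a act_prob pi t c a = 1.
  rewrite /act_prob /aconf.
  apply: (@sum_prod1 R _ _ (fun i v => pi t (tag i) (c i) (emp_mu R c) v)).
  by move=> i; exact: (hpi _ _ _ _).2.
by rewrite mulr1.
Qed.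

Theorem lemma6 (R : rcfType) (X U : finType) (K : nat) (N : 'I_K -> nat)
  (hK : (0 < K)%N) (hN : forall k, (0 < N k)%N)
  (mu0 : {ffun sconf X N -> R})
  (pi : nat -> decision_rule R X U K)
  (P : trans_law R X U K)
  (hmu0 : is_pdist mu0)
  (hpi : forall t k x mu, is_pdist (pi t k x mu))
  (hP : forall k x u mu nu, is_pdist (P k x u mu nu))
  (t : nat) :
  expected_dev mu0 pi P t <=
    (\sum_(k < K) Num.sqrt ((N k)%:R : R)) * Num.sqrt (#|U|%:R : R) / (Npop N)%:R.
Proof.
have [H0 H1] := @state_law_pd R X U K N mu0 pi P hmu0 hpi hP t.
rewrite /expected_dev.
set B := (X in _ <= X).
rewrite -[B]mul1r -H1 mulr_suml; apply: ler_sum => c _.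
under eq_bigr do rewrite -mulrA.
rewrite -mulr_sumr; apply: ler_wpM2l => //.
apply: (@core R U K N (fun i v => pi t (tag i) (c i) (emp_mu R c) v)).
- by move=> i u; exact: (hpi _ _ _ _).1.
- by move=> i; exact: (hpi _ _ _ _).2.
- move=> u k; rewrite ffunE.
  under eq_bigr do rewrite ffunE mulrA.
  rewrite -mulr_suml; congr (_ / _).
  under eq_bigr do rewrite mulr_sumr.
  rewrite /=. rewrite exchange_big /=; apply: eq_bigr => j _.
  rewrite (bigD1 (c (Tagged (fun k => 'I_(N k)) j))) //= eqxx mulr1.
  rewrite big1 ?addr0 // => x hx.
  by rewrite eq_sym (negbTE hx) mulr0.
Qed.
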